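(* Let $R,S$ be Polish spaces, $e:S\to R$ a Borel map, $f:S\to\mathbb{R}^d$ a Borel map, and $\lambda\in\mathcal{M}_+(S)$ with $f\in L^1(\lambda)$. Assume that $$\mathcal{H}\big(e_\sharp(f\lambda)\,\big|\,e_\sharp\lambda\big)=\mathcal{H}(f\lambda\,|\,\lambda).$$ Let $v:R\to\mathbb{R}^d$ be a version of the density of $e_\sharp(f\lambda)$ with respect to $e_\sharp\lambda$. Then $f=v\circ e$ $\lambda$-a.e.
   Context: $\mathcal{M}_+(S)$ denotes finite positive Borel measures. For $\mu$ a finite positive measure and $\nu$ an $\mathbb{R}^d$-valued measure with Lebesgue decomposition $\nu=\frac{d\nu}{d\mu}\mu+\nu^\perp$, $\nu^\perp\perp\mu$, set $\mathcal{H}(\nu|\mu):=\int\sqrt{1+|\frac{d\nu}{d\mu}|^2}\,d\mu+|\nu^\perp|$, where $|\nu^\perp|$ is the total variation (total mass) of $\nu^\perp$. *)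

(* Defs.v *)
From HB Require Import structures.
From mathcomp Require Import all_boot all_order all_algebra.
From mathcomp Require Import all_classical all_reals all_analysis.
Set Implicit Arguments. Unset Strict Implicit. Unset Printing Implicit Defensive.
Import Order.TTheory GRing.Theory Num.Theory.
Local Open Scope classical_set_scope.
Local Open Scope ring_scope.

Section Defs.
Variable K : realType.

Definition enorm (n : nat) (x : 'rV[K]_n) : K := Num.sqrt (\sum_(i < n) x 0 i ^+ 2).

Definition is_metric (T : Type) (dist : T -> T -> K) :=
  [/\ forall x y, 0 <= dist x y,
      forall x y, dist x y = 0 <-> x = y,
      forall x y, dist x y = dist y x &
      forall x y z, dist x z <= dist x y + dist y z].

Definition metric_open (T : Type) (dist : T -> T -> K) (U : set T) :=
  forall x, U x -> exists2 e : K, 0 < e & forall y, dist x y < e -> U y.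

Definition metric_complete (T : Type) (dist : T -> T -> K) :=
  forall u : nat -> T,
    (forall e : K, 0 < e -> exists N, forall m n, (N <= m)%N -> (N <= n)%N ->
       dist (u m) (u n) < e) ->
    exists x, forall e : K, 0 < e -> exists N, forall n, (N <= n)%N -> dist (u n) x < e.

Definition metric_separable (T : Type) (dist : T -> T -> K) :=
  exists D : set T, countable D /\
    forall x (e : K), 0 < e -> exists2 y, D y & dist x y < e.

Definition polish_borel (dT : measure_display) (T : measurableType dT) :=
  exists dist : T -> T -> K,
    [/\ is_metric dist, metric_complete dist, metric_separable dist &
        (@measurable dT T) = <<s metric_open dist >>].

Definition dens_vmeasure (dT : measure_display) (T : measurableType dT) (n : nat)
  (mu : set T -> \bar K) (g : T -> 'rV[K]_n) : set T -> 'rV[K]_n :=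
  fun A => \row_(i < n) fine (\int[mu]_(x in A) (g x 0 i)%:E).

Definition push_vmeasure (dT dU : measure_display) (T : measurableType dT)
  (U : measurableType dU) (n : nat) (nu : set T -> 'rV[K]_n) (e : T -> U)
  : set U -> 'rV[K]_n := fun B => nu (e @^-1` B).

Definition is_density (dT : measure_display) (T : measurableType dT) (n : nat)
  (mu : set T -> \bar K) (nu : set T -> 'rV[K]_n) (g : T -> 'rV[K]_n) :=
  [/\ forall i, measurable_fun setT (fun x => g x 0 i),
      forall i, mu.-integrable setT (fun x => (g x 0 i)%:E) &
      forall A, measurable A -> nu A = dens_vmeasure mu g A].

(** Lebesgue decomposition nu = g mu + nu^perp with nu^perp = nu restricted to
    the mu-null measurable set N. *)
Definition lebesgue_decomp (dT : measure_display) (T : measurableType dT) (n : nat)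
  (mu : set T -> \bar K) (nu : set T -> 'rV[K]_n) (g : T -> 'rV[K]_n) (N : set T) :=
  [/\ forall i, measurable_fun setT (fun x => g x 0 i),
      forall i, mu.-integrable setT (fun x => (g x 0 i)%:E),
      measurable N, mu N = 0%E &
      forall A, measurable A -> nu A = dens_vmeasure mu g A + nu (A `&` N)].

Definition total_variation_on (dT : measure_display) (T : measurableType dT) (n : nat)
  (nu : set T -> 'rV[K]_n) (N : set T) : \bar K :=
  ereal_sup [set (\sum_(i < m) enorm (nu (F i)))%:E | m in [set: nat] &
     F in [set F : nat -> set T | [/\ forall i, measurable (F i),
                                      forall i, F i `<=` N &
                                      trivIset setT F]]].

Definition H_value (dT : measure_display) (T : measurableType dT) (n : nat)
  (mu : set T -> \bar K) (nu : set T -> 'rV[K]_n) (h : \bar K) :=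
  exists g N, lebesgue_decomp mu nu g N /\
    h = (\int[mu]_x (Num.sqrt (1 + enorm (g x) ^+ 2))%:E + total_variation_on nu N)%E.

Definition Hfun (dT : measure_display) (T : measurableType dT) (n : nat)
  (mu : set T -> \bar K) (nu : set T -> 'rV[K]_n) : \bar K :=
  xget +oo%E (H_value mu nu).

End Defs.

(* Main.v *)
Require Import Defs.
From HB Require Import structures.
From mathcomp Require Import all_boot all_order all_algebra.
From mathcomp Require Import all_classical all_reals all_analysis.
From mathcomp Require Import measurable_realfun ring lra.
Import Order.TTheory GRing.Theory Num.Theory.
Local Open Scope classical_set_scope.
Local Open Scope ring_scope.
Import HBNNSimple numFieldTopology.Exports numFieldNormedType.Exports.
Set Implicit Arguments. Unset Strict Implicit.
Lemma sum_rep (dS dR : measure_display) (S : measurableType dS) (R : measurableType dR)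
  (K : realType) (lam : {measure set S -> \bar K}) (e : S -> R)
  (me : measurable_fun setT e) (h : {nnsfun R >-> K}) (P : S -> \bar K)
  (mP : measurable_fun setT P) (P0 : forall x, (0 <= P x)%E) :
  (\int[lam]_x ((h (e x))%:E * P x) =
   \sum_(y \in range h) (y%:E * \int[lam]_(x in e @^-1` (h @^-1` [set y])) P x))%E.
Proof.
have mh : measurable_fun setT h by [].
have mI y : measurable_fun setT (fun x => (y * \1_(h @^-1` [set y]) (e x))%:E * P x)%E.
  apply: emeasurable_funM => //; apply/measurable_EFinP.
  apply: measurable_funM => //; apply: measurableT_comp => //.
transitivity (\int[lam]_x (\sum_(y \in range h)
    ((y * \1_(h @^-1` [set y]) (e x))%:E * P x)))%E.
  apply: eq_integral => x _; rewrite fimfunE -fsumEFin //.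
  by rewrite ge0_mule_fsuml // => y; exact: nnfun_muleindic_ge0.
rewrite ge0_integral_fsum //; last first.
  by move=> y x _; rewrite mule_ge0 // nnfun_muleindic_ge0.
apply: eq_fsbigr => y yh.
have y0 : (0 <= y)%R by move: yh; rewrite inE => -[t _ <-].
under eq_integral do rewrite EFinM -muleA.
rewrite ge0_integralZl //; last 2 first.
- apply: emeasurable_funM => //; apply/measurable_EFinP.
  by apply: measurableT_comp => //; apply: measurable_indic;
     rewrite -[X in measurable X]setTI; exact: mh.
- by move=> x _; rewrite mule_ge0 // lee_fin.
congr (_ * _)%E.
rewrite -[e @^-1` _]setTI integral_mkcondr; apply: eq_integral => x _.
rewrite epatch_indic /= muleC.
by rewrite /preimage /= indicE.
Qed.

Lemma lim_rep (dS dR : measure_display) (S : measurableType dS) (R : measurableType dR)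
  (K : realType) (lam : {measure set S -> \bar K}) (e : S -> R)
  (me : measurable_fun setT e) (k : R -> \bar K) (mk : measurable_fun setT k)
  (k0 : forall y, (0 <= k y)%E) (P : S -> \bar K)
  (mP : measurable_fun setT P) (P0 : forall x, (0 <= P x)%E)
  (Pf : forall x, P x \is a fin_num) :
  (\int[lam]_x (k (e x) * P x) =
   limn (fun n => \sum_(y \in range (nnsfun_approx measurableT mk n))
     (y%:E * \int[lam]_(x in e @^-1` (nnsfun_approx measurableT mk n @^-1` [set y])) P x)))%E.
Proof.
set h := nnsfun_approx measurableT mk.
have fE x : (k (e x) * P x = limn (fun n => (h n (e x))%:E * P x))%E.
  apply/esym/cvg_lim => //; rewrite muleC; under eq_fun do rewrite muleC.
  apply: cvgeZl => //; exact: cvg_nnsfun_approx.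
under eq_integral do rewrite fE.
rewrite monotone_convergence //.
- by congr (limn _); apply/funext => n; rewrite sum_rep.
- move=> n; apply: emeasurable_funM => //; apply/measurable_EFinP.
  exact: measurableT_comp.
- by move=> n x _; rewrite mule_ge0 // lee_fin.
- move=> x _ a b ab /=; rewrite lee_wpmul2r // lee_fin.
  exact/lefP/nd_nnsfun_approx.
Qed.

Lemma push_eq (dS dR : measure_display) (S : measurableType dS) (R : measurableType dR)
  (K : realType) (lam : {measure set S -> \bar K}) (e : S -> R)
  (me : measurable_fun setT e) (k : R -> \bar K) (mk : measurable_fun setT k)
  (k0 : forall y, (0 <= k y)%E) (P Q : S -> \bar K)
  (mP : measurable_fun setT P) (P0 : forall x, (0 <= P x)%E)
  (Pf : forall x, P x \is a fin_num)
  (mQ : measurable_fun setT Q) (Q0 : forall x, (0 <= Q x)%E)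
  (Qf : forall x, Q x \is a fin_num)
  (hPQ : forall B, measurable B ->
     (\int[lam]_(x in e @^-1` B) P x = \int[lam]_(x in e @^-1` B) Q x)%E) :
  (\int[lam]_x (k (e x) * P x) = \int[lam]_x (k (e x) * Q x))%E.
Proof.
rewrite (@lim_rep _ _ _ _ _ lam e me k mk k0 P mP P0 Pf) (@lim_rep _ _ _ _ _ lam e me k mk k0 Q mQ Q0 Qf).
congr (limn _); apply/funext => n; apply: eq_fsbigr => y _.
rewrite hPQ //; rewrite -[X in measurable X]setTI; exact: (measurable_funP _).
Qed.

Lemma bounded_cond_exp (dS dR : measure_display) (S : measurableType dS) (R : measurableType dR)
  (K : realType) (lam : {measure set S -> \bar K}) (e : S -> R)
  (me : measurable_fun setT e) (u : S -> K)
  (iu : lam.-integrable setT (EFin \o u))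
  (hu : forall B, measurable B -> (\int[lam]_(x in e @^-1` B) (u x)%:E = 0)%E)
  (k : R -> K) (mk : measurable_fun setT k) (kb : forall y, `|k y| <= 1) :
  (\int[lam]_x (k (e x) * u x)%:E = 0)%E.
Proof.
have mu : measurable_fun setT (EFin \o u) := measurable_int _ iu.
have mPu : measurable_fun setT (EFin \o u)^\+%E by exact: measurable_funepos.
have mNu : measurable_fun setT (EFin \o u)^\-%E by exact: measurable_funeneg.
have mk1 : measurable_fun setT (fun y => (k y + 1)%:E).
  by apply/measurable_EFinP; apply: measurable_funD.
have k10 y : (0 <= (k y + 1)%:E)%E.
  by rewrite lee_fin -lerBlDr sub0r; move: (kb y); rewrite ler_norml => /andP[].
have hPN : forall B, measurable B ->
   (\int[lam]_(x in e @^-1` B) (EFin \o u)^\+ x = \int[lam]_(x in e @^-1` B) (EFin \o u)^\- x)%E.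
  move=> B mB; have meB : measurable (e @^-1` B).
    by rewrite -[X in measurable X]setTI; exact: me.
  have iuB : lam.-integrable (e @^-1` B) (EFin \o u) by exact: integrableS iu.
  have := hu B mB; rewrite integralE => /eqP.
  rewrite sube_eq ?add0e; first by move/eqP.
  - exact: integrable_pos_fin_num.
  - exact: fin_num_adde_defr.
have Pf x : (EFin \o u)^\+%E x \is a fin_num by rewrite funeposE /= -EFin_max.
have Nf x : (EFin \o u)^\-%E x \is a fin_num by rewrite funenegE (_ : (EFin \o u) x = (u x)%:E) // -EFinN -EFin_max.
have Heq := @push_eq _ _ _ _ _ lam e me _ mk1 k10 _ _ mPu (fun x => funepos_ge0 _ x)
  Pf mNu (fun x => funeneg_ge0 _ x) Nf hPN.
have bk : [bounded k (e x) + 1 | x in setT].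
  exists 2; split; first by rewrite num_real.
  move=> M M2 x _ /=; apply: ltW; apply: le_lt_trans M2.
  by apply: le_trans (ler_normD _ _) _; rewrite normr1 lerD2r.
have mke : measurable_fun setT (fun x => k (e x) + 1).
  by apply: measurable_funD => //; exact: measurableT_comp.
have iA : lam.-integrable setT (fun x => (k (e x) + 1)%:E * (EFin \o u)^\+%E x)%E.
  by apply: (integrableMr _ mke bk) => //; exact: integrable_funepos.
have iB : lam.-integrable setT (fun x => (k (e x) + 1)%:E * (EFin \o u)^\-%E x)%E.
  by apply: (integrableMr _ mke bk) => //; exact: integrable_funeneg.
transitivity (\int[lam]_x (((k (e x) + 1)%:E * (EFin \o u)^\+%E x
   - (k (e x) + 1)%:E * (EFin \o u)^\-%E x) - (u x)%:E))%E.
  apply: eq_integral => x _; rewrite funeposE funenegE (_ : (EFin \o u) x = (u x)%:E) // -EFinN -!EFin_max.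
  rewrite -!EFinM -!EFinB; congr EFin.
  case: (leP 0 (u x)) => hx.
    rewrite (_ : Num.max (- u x) 0 = 0); first ring.
    by apply/max_idPr; rewrite oppr_le0.
  rewrite (_ : Num.max (- u x) 0 = - u x); first ring.
  by apply/max_idPl; rewrite oppr_ge0 ltW.
rewrite integralB //; last exact: integrableB.
rewrite integralB // Heq subee; last exact: integrable_fin_num.
by rewrite -[setT](preimage_setT e) hu // sube0.
Qed.

Lemma measurable_phi (d : measure_display) (T : measurableType d) (K : realType) (n : nat)
  (g : T -> 'rV[K]_n) (mg : forall i, measurable_fun setT (fun x => g x 0 i)) :
  measurable_fun setT (fun x => Num.sqrt (1 + enorm (g x) ^+ 2)).
Proof.
have ms : measurable_fun setT (fun x => \sum_(i < n) g x 0 i ^+ 2).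
  apply: measurable_sum => i; exact: measurable_funX.
have msq := continuous_measurable_fun (@sqrt_continuous K).
apply: measurableT_comp => //; apply: measurable_funD => //.
apply: measurable_funX; rewrite /enorm; exact: measurableT_comp.
Qed.

Lemma enorm0 (K : realType) (n : nat) : enorm (0 : 'rV[K]_n) = 0.
Proof.
by rewrite /enorm big1 ?sqrtr0 // => i _; rewrite mxE expr0n.
Qed.

Lemma TV0 (d : measure_display) (T : measurableType d) (K : realType) (n : nat)
  (nu : set T -> 'rV[K]_n) (N : set T)
  (h : forall A, measurable A -> A `<=` N -> nu A = 0) :
  total_variation_on nu N = 0%E.
Proof.
apply/eqP; rewrite eq_le; apply/andP; split.
  apply: ge_ereal_sup => _ [m _ [F [mF FN _] <-]].
  by rewrite big1 // => i _; rewrite h // enorm0.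
apply: ereal_sup_ubound; exists 0%N => //; exists (fun _ => set0).
  by split => // [i|]; [exact: sub0set | exact: trivIset_set0].
by rewrite big_ord0.
Qed.

Lemma Hfun_dens (d : measure_display) (T : measurableType d) (K : realType) (n : nat)
  (mu : {measure set T -> \bar K}) (nu : set T -> 'rV[K]_n) (g0 : T -> 'rV[K]_n) :
  is_density mu nu g0 ->
  Hfun mu nu = (\int[mu]_x (Num.sqrt (1 + enorm (g0 x) ^+ 2))%:E)%E.
Proof.
move=> [mg0 ig0 dg0].
have nu0 A : measurable A -> mu A = 0%E -> nu A = 0.
  move=> mA muA; rewrite dg0 //; apply/rowP => i; rewrite !mxE.
  rewrite null_set_integral //; apply/measurable_EFinP; exact: measurable_funTS.
have nuN A N : measurable N -> mu N = 0%E -> measurable A -> A `<=` N -> nu A = 0.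
  by move=> mN muN mA AN; apply: nu0 => //; exact: (subset_measure0 mA mN AN muN).
have ex : H_value mu nu (\int[mu]_x (Num.sqrt (1 + enorm (g0 x) ^+ 2))%:E)%E.
  exists g0, set0; split.
    split => // A mA; rewrite setI0 (nu0 set0) ?measure0 // addr0; exact: dg0.
  rewrite TV0 ?adde0 // => A mA A0; apply: nu0 => //.
  by move: A0; rewrite subset0 => ->; rewrite measure0.
rewrite /Hfun; have := xgetPex +oo%E (ex_intro _ _ ex).
move=> [g [N [[mg ig mN muN dec] ->]]].
rewrite TV0 ?adde0; last by move=> A mA AN; exact: (nuN A N).
have ae_i i : ae_eq mu setT (fun x => (g0 x 0 i)%:E) (fun x => (g x 0 i)%:E).
  apply: integral_ae_eq => //; first by apply/measurable_EFinP.
  move=> E _ mE; have := dec E mE.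
  rewrite (nuN (E `&` N) N) //; try exact: measurableI; try exact: subIsetr.
  rewrite addr0 dg0 // => /rowP /(_ i); rewrite !mxE => hf.
  have f1 : (\int[mu]_(x in E) (g0 x 0 i)%:E)%E \is a fin_num.
    by apply: integrable_fin_num => //; exact: integrableS (ig0 i).
  have f2 : (\int[mu]_(x in E) (g x 0 i)%:E)%E \is a fin_num.
    by apply: integrable_fin_num => //; exact: integrableS (ig i).
  by rewrite -(fineK f1) -(fineK f2) hf.
have H : {ae mu, forall x, forall i, g0 x 0 i = g x 0 i}.
  apply: filter_forall => i; apply: filterS (ae_i i) => x /(_ I) [].
  by [].
apply: ae_eq_integral => //; try by apply/measurable_EFinP; exact: measurable_phi.
apply: filterS H => x Hx _.
have -> : g x = g0 x by apply/rowP => j; rewrite Hx.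
by [].
Qed.
Lemma enorm_sq (K : realType) (n : nat) (a : 'rV[K]_n) :
  enorm a ^+ 2 = \sum_(i < n) a 0 i ^+ 2.
Proof. by rewrite /enorm sqr_sqrtr // sumr_ge0 // => i _; exact: sqr_ge0. Qed.

Lemma cauchy_schwarz (K : realType) (n : nat) (a b : 'I_n -> K) :
  (\sum_(i < n) a i * b i) ^+ 2 <= (\sum_(i < n) a i ^+ 2) * (\sum_(i < n) b i ^+ 2).
Proof.
have E : \sum_(i < n) \sum_(j < n) (a i * b j - a j * b i) ^+ 2 =
   2 * ((\sum_(i < n) a i ^+ 2) * (\sum_(i < n) b i ^+ 2) - (\sum_(i < n) a i * b i) ^+ 2).
  have -> : \sum_(i < n) \sum_(j < n) (a i * b j - a j * b i) ^+ 2 =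
     \sum_(i < n) \sum_(j < n) (a i ^+ 2 * b j ^+ 2) +
     \sum_(i < n) \sum_(j < n) (a j ^+ 2 * b i ^+ 2) -
     2 * \sum_(i < n) \sum_(j < n) (a i * b i * (a j * b j)).
    rewrite mulr_sumr -big_split -sumrB /=; apply: eq_bigr => i _.
    rewrite mulr_sumr -big_split -sumrB /=; apply: eq_bigr => j _.
    ring.
  rewrite [X in _ + X - _ = _]exchange_big /=.
  have e1 : (\sum_(i < n) a i ^+ 2) * (\sum_(i < n) b i ^+ 2) =
      \sum_(i < n) \sum_(j < n) (a i ^+ 2 * b j ^+ 2).
    by rewrite mulr_suml; apply: eq_bigr => i _; rewrite mulr_sumr.
  have e2 : (\sum_(i < n) a i * b i) ^+ 2 =
      \sum_(i < n) \sum_(j < n) (a i * b i * (a j * b j)).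
    by rewrite expr2 mulr_suml; apply: eq_bigr => i _; rewrite mulr_sumr.
  rewrite e1 e2; ring.
have : 0 <= \sum_(i < n) \sum_(j < n) (a i * b j - a j * b i) ^+ 2.
  by apply: sumr_ge0 => i _; apply: sumr_ge0 => j _; exact: sqr_ge0.
by rewrite E pmulr_rge0 // subr_ge0.
Qed.

Lemma key_ineq (K : realType) (n : nat) (a b : 'rV[K]_n) :
  \sum_(i < n) (a 0 i - b 0 i) ^+ 2 <=
  (1 + \sum_(i < n) a 0 i ^+ 2) * (1 + \sum_(i < n) b 0 i ^+ 2)
   - (1 + \sum_(i < n) a 0 i * b 0 i) ^+ 2.
Proof.
have cs := cauchy_schwarz (fun i => a 0 i) (fun i => b 0 i).
have -> : \sum_(i < n) (a 0 i - b 0 i) ^+ 2 = \sum_(i < n) a 0 i ^+ 2 +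
   \sum_(i < n) b 0 i ^+ 2 - 2 * \sum_(i < n) a 0 i * b 0 i.
  rewrite mulr_sumr -big_split -sumrB /=; apply: eq_bigr => i _; ring.
move: cs => /=.
set A := \sum_(i < n) a 0 i ^+ 2; set B := \sum_(i < n) b 0 i ^+ 2.
set D := \sum_(i < n) a 0 i * b 0 i.
move=> cs; nra.
Qed.

Definition phi (K : realType) (n : nat) (a : 'rV[K]_n) := Num.sqrt (1 + enorm a ^+ 2).

Lemma phi_gt0 (K : realType) (n : nat) (a : 'rV[K]_n) : 0 < phi a.
Proof.
rewrite /phi sqrtr_gt0; apply: (lt_le_trans ltr01); rewrite lerDl; exact: sqr_ge0.
Qed.

Lemma psi_mul (K : realType) (n : nat) (a b : 'rV[K]_n) :
  phi b * (phi a - phi b - \sum_(i < n) (b 0 i / phi b) * (a 0 i - b 0 i)) =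
  phi a * phi b - (1 + \sum_(i < n) a 0 i * b 0 i).
Proof.
have pb := phi_gt0 b.
have pb2 : phi b ^+ 2 = 1 + \sum_(i < n) b 0 i ^+ 2.
  rewrite /phi sqr_sqrtr ?enorm_sq //; rewrite addr_ge0 // sumr_ge0 // => i _; exact: sqr_ge0.
have -> : \sum_(i < n) (b 0 i / phi b) * (a 0 i - b 0 i) =
   (\sum_(i < n) a 0 i * b 0 i - \sum_(i < n) b 0 i ^+ 2) / phi b.
  rewrite -sumrB mulr_suml; apply: eq_bigr => i _; ring.
rewrite !mulrBr mulrCA divff ?mulr1; last exact: lt0r_neq0.
rewrite -expr2 pb2 mulrC; ring.
Qed.

Lemma dprime (K : realType) (n : nat) (a b : 'rV[K]_n) :
  0 <= phi a * phi b - (1 + \sum_(i < n) a 0 i * b 0 i) /\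
  (phi a * phi b - (1 + \sum_(i < n) a 0 i * b 0 i) = 0 -> a = b).
Proof.
have ki := key_ineq a b.
set A := \sum_(i < n) a 0 i ^+ 2 in ki; set B := \sum_(i < n) b 0 i ^+ 2 in ki.
set D := \sum_(i < n) a 0 i * b 0 i in ki *.
have A0 : 0 <= A by apply: sumr_ge0 => i _; exact: sqr_ge0.
have B0 : 0 <= B by apply: sumr_ge0 => i _; exact: sqr_ge0.
have Q0 : 0 <= \sum_(i < n) (a 0 i - b 0 i) ^+ 2 by apply: sumr_ge0 => i _; exact: sqr_ge0.
have pp : phi a * phi b = Num.sqrt ((1 + A) * (1 + B)).
  by rewrite /phi !enorm_sq sqrtrM // addr_ge0.
have le1 : (1 + D) ^+ 2 <= (1 + A) * (1 + B) by lra.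
have ge : 1 + D <= phi a * phi b.
  rewrite pp; apply: le_trans (ler_norm (1 + D)) _.
  by rewrite -sqrtr_sqr ler_wsqrtr.
split; first by rewrite subr_ge0.
move=> /eqP; rewrite subr_eq0 => /eqP E.
have E2 : (1 + A) * (1 + B) = (1 + D) ^+ 2.
  by rewrite -E pp sqr_sqrtr // mulr_ge0 // addr_ge0.
have Q00 : \sum_(i < n) (a 0 i - b 0 i) ^+ 2 = 0 by lra.
apply/rowP => j.
have := @psumr_eq0P _ _ _ (fun i => (a 0 i - b 0 i) ^+ 2) (fun i _ => sqr_ge0 (a 0 i - b 0 i)) Q00 j isT.
by move/eqP; rewrite sqrf_eq0 subr_eq0 => /eqP.
Qed.

Lemma cont_g (K : realType) : continuous (fun t : K => (Num.sqrt (1 + `|t|))^-1).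
Proof.
move=> t.
have h1 : {for t, continuous (fun t : K => Num.sqrt (1 + `|t|))}.
  apply: (@continuous_comp K K K (fun t : K => 1 + `|t|) Num.sqrt).
    apply: (@continuousD K K K (fun=> 1) Num.norm); [exact: cst_continuous|exact: norm_continuous].
  exact: sqrt_continuous.
apply: (@continuous_comp K K K (fun t : K => Num.sqrt (1 + `|t|)) GRing.inv) => //.
apply: inv_continuous; rewrite sqrtr_eq0 -ltNge.
by apply: (lt_le_trans ltr01); rewrite lerDl.
Qed.

Lemma measurable_w (d : measure_display) (T : measurableType d) (K : realType) (n : nat)
  (g : T -> 'rV[K]_n) (mg : forall i, measurable_fun setT (fun x => g x 0 i)) i :
  measurable_fun setT (fun x => g x 0 i / phi (g x)).
Proof.
have ms : measurable_fun setT (fun x => \sum_(i < n) g x 0 i ^+ 2).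
  apply: measurable_sum => j; exact: measurable_funX.
have -> : (fun x => g x 0 i / phi (g x)) =
   (fun x => g x 0 i * (Num.sqrt (1 + `|\sum_(i < n) g x 0 i ^+ 2|))^-1).
  apply/funext => x; rewrite /phi enorm_sq ger0_norm //.
  by apply: sumr_ge0 => j _; exact: sqr_ge0.
apply: measurable_funM => //.
exact: measurableT_comp (continuous_measurable_fun (@cont_g K)) ms.
Qed.

Lemma w_le1 (K : realType) (n : nat) (a : 'rV[K]_n) i : `|a 0 i / phi a| <= 1.
Proof.
have pa := phi_gt0 a.
rewrite normrM normfV (gtr0_norm pa) ler_pdivrMr // mul1r.
rewrite /phi enorm_sq -sqrtr_sqr ler_wsqrtr //.
rewrite (bigD1 i) //= addrCA lerDl addr_ge0 //.
by apply: sumr_ge0 => j _; exact: sqr_ge0.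
Qed.

Lemma phi_le (K : realType) (n : nat) (a : 'rV[K]_n) :
  phi a <= 1 + \sum_(i < n) `|a 0 i|.
Proof.
have hs : \sum_(i < n) a 0 i ^+ 2 <= (\sum_(i < n) `|a 0 i|) ^+ 2 /\
          0 <= \sum_(i < n) `|a 0 i|.
  apply: (big_ind2 (fun u v => u <= v ^+ 2 /\ 0 <= v)).
  - by rewrite expr0n.
  - move=> x1 x2 y1 y2 [h1 h2] [h3 h4]; split; last exact: addr_ge0.
    nra.
  - by move=> i _; rewrite -normrX ger0_norm ?sqr_ge0 //.
have [h1 h2] := hs.
rewrite /phi enorm_sq -[X in _ <= X]ger0_norm ?addr_ge0 // -sqrtr_sqr ler_wsqrtr //.
nra.
Qed.

Lemma integrable_phi (d : measure_display) (T : measurableType d) (K : realType) (n : nat)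
  (lam : {finite_measure set T -> \bar K}) (g : T -> 'rV[K]_n)
  (mg : forall i, measurable_fun setT (fun x => g x 0 i))
  (ig : forall i, lam.-integrable setT (fun x => (g x 0 i)%:E)) :
  lam.-integrable setT (fun x => (phi (g x))%:E).
Proof.
have ib : lam.-integrable setT
    (fun x => adde ((EFin \o cst 1) x) (\sum_(i < n) `|(g x 0 i)%:E|%E)).
  apply: (integrableD measurableT); first exact: finite_measure_integrable_cst.
  apply: integrable_sum => // i _; exact: (integrable_abse (ig i)).
apply: le_integrable ib => //; first by apply/measurable_EFinP; exact: measurable_phi.
move=> x _ /=; rewrite (_ : adde _ _ = (1 + \sum_(i < n) `|g x 0 i|)%:E); last first.
  by rewrite EFinD -sumEFin.
rewrite abse_EFin lee_fin.
rewrite (ger0_norm (ltW (phi_gt0 _))) (@ger0_norm _ (1 + _)); first exact: phi_le.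
by apply: addr_ge0 => //; apply: sumr_ge0.
Qed.

Section pfmeasure.
Local Open Scope ereal_scope.
Context (d d' : measure_display) (T1 : measurableType d) (T2 : measurableType d')
        (R : realType) (m : {measure set T1 -> \bar R}) (f : T1 -> T2).
Definition pf (mf : measurable_fun [set: T1] f) := pushforward m f.
Variable mf : measurable_fun [set: T1] f.
Let pf0 : pf mf set0 = 0.
Proof. by rewrite /pf /pushforward preimage_set0 measure0. Qed.
Let pf_ge0 A : 0 <= pf mf A.
Proof. by apply: measure_ge0. Qed.
Let pf_sa : semi_sigma_additive (pf mf).
Proof.
move=> F mF tF mUF; rewrite /pf /pushforward preimage_bigcup.
apply: measure_semi_sigma_additive.
- by move=> n; rewrite -[X in measurable X]setTI; exact: mf.
- apply/trivIsetP => /= i j _ _ ij; rewrite -preimage_setI.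
  by move/trivIsetP : tF => /(_ _ _ _ _ ij) ->//; rewrite preimage_set0.
- by rewrite -preimage_bigcup -[X in measurable X]setTI; exact: mf.
Qed.
HB.instance Definition _ := isMeasure.Build _ _ _ (pf mf) pf0 pf_ge0 pf_sa.
End pfmeasure.

Unset Implicit Arguments.
Theorem lemma5p10 (K : realType) (dR dS : measure_display)
  (R : measurableType dR) (S : measurableType dS) (d : nat)
  (e : S -> R) (f : S -> 'rV[K]_d) (lam : {finite_measure set S -> \bar K})
  (v : R -> 'rV[K]_d) :
  polish_borel K R -> polish_borel K S ->
  measurable_fun setT e ->
  (forall i, measurable_fun setT (fun x => f x 0 i)) ->
  (forall i, lam.-integrable setT (fun x => (f x 0 i)%:E)) ->
  Hfun (pushforward lam e) (push_vmeasure (dens_vmeasure lam f) e)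
    = Hfun lam (dens_vmeasure lam f) ->
  is_density (pushforward lam e) (push_vmeasure (dens_vmeasure lam f) e) v ->
  {ae lam, forall x, f x = v (e x)}.
Proof.
move=> _ _ me mf intf HH dv.
have H1 : Hfun (pushforward lam e) (push_vmeasure (dens_vmeasure lam f) e) =
   (\int[pf lam me]_x (Num.sqrt (1 + enorm (v x) ^+ 2))%:E)%E :=
  @Hfun_dens _ _ _ _ (pf lam me) _ _ dv.
have H2 : Hfun lam (dens_vmeasure lam f) =
   (\int[lam]_x (Num.sqrt (1 + enorm (f x) ^+ 2))%:E)%E.
  by apply: Hfun_dens; split.
move: (dv) => [mv iv dvv].
have mphiv := measurable_phi mv.
have H3 : (\int[pf lam me]_x (Num.sqrt (1 + enorm (v x) ^+ 2))%:E =
    \int[lam]_x (Num.sqrt (1 + enorm (v (e x)) ^+ 2))%:E)%E.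
  rewrite /pf (@ge0_integral_pushforward _ _ _ _ _ _ me lam setT) //.
  by apply/measurable_EFinP.
rewrite H1 H2 H3 in HH.
set h := fun x => v (e x).
have mh i : measurable_fun setT (fun x => h x 0 i).
  exact: (measurableT_comp (mv i) me).
have ih i : lam.-integrable setT (fun x => (h x 0 i)%:E).
  apply/integrableP; split; first by apply/measurable_EFinP.
  move/integrableP: (iv i) => [_].
  rewrite (@ge0_integral_pushforward _ _ _ _ _ _ me lam setT) //.
  by apply: measurableT_comp => //; exact/measurable_EFinP.
have hu i B : measurable B ->
    (\int[lam]_(x in e @^-1` B) ((f x 0 i - h x 0 i)%:E) = 0)%E.
  move=> mB.
  have meB : measurable (e @^-1` B).
    by rewrite -[X in measurable X]setTI; exact: (me measurableT B mB).
  have := dvv B mB => /rowP /(_ i).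
  rewrite /push_vmeasure /dens_vmeasure !mxE.
  rewrite (@integral_pushforward _ _ _ _ _ e me lam B (fun y => (v y 0 i)%:E)) //; last first.
  - exact: integrableS (ih i).
  - by apply/measurable_EFinP.
  move=> hf.
  have f1 : (\int[lam]_(x in e @^-1` B) (f x 0 i)%:E)%E \is a fin_num.
    by apply: integrable_fin_num => //; exact: integrableS (intf i).
  have f2 : (\int[lam]_(x in e @^-1` B) (h x 0 i)%:E)%E \is a fin_num.
    by apply: integrable_fin_num => //; exact: integrableS (ih i).
  under eq_integral do rewrite EFinB.
  rewrite integralB //; [|exact: integrableS (intf i)|exact: integrableS (ih i)].
  by rewrite -(fineK f1) -(fineK f2) hf subee.
have iu i : lam.-integrable setT (EFin \o (fun x => f x 0 i - h x 0 i)).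
  rewrite (_ : _ \o _ = (fun x => (f x 0 i)%:E) \- (fun x => (h x 0 i)%:E))%E.
    exact: integrableB.
  by apply/funext => x; rewrite /= EFinB.
pose w i y := v y 0 i / phi (v y).
have L i : (\int[lam]_x (w i (e x) * (f x 0 i - h x 0 i))%:E = 0)%E.
  exact: (@bounded_cond_exp _ _ _ _ _ lam e me (fun x => f x 0 i - h x 0 i)
    (iu i) (hu i) (w i) (measurable_w mv i) (fun y => w_le1 (v y) i)).
have mwe i : measurable_fun setT (fun x => w i (e x)).
  exact: (measurableT_comp (measurable_w mv i) me).
have bwe i : [bounded w i (e x) | x in setT].
  exists 1; split; first by rewrite num_real.
  by move=> M M1 x _ /=; apply: ltW; apply: le_lt_trans M1; exact: w_le1.
have iW i : lam.-integrable setT (fun x => (w i (e x) * (f x 0 i - h x 0 i))%:E).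
  have := integrableMr measurableT (mwe i) (bwe i) (iu i).
  by apply: eq_integrable => // x _ /=; rewrite EFinM.
have iF := integrable_phi mf intf.
have iH := integrable_phi mh ih.
pose psi x := phi (f x) - phi (h x) - \sum_(i < d) w i (e x) * (f x 0 i - h x 0 i).
have psiE : (fun x => (psi x)%:E) = (fun x => ((phi (f x))%:E - (phi (h x))%:E)
    - \sum_(i < d) (w i (e x) * (f x 0 i - h x 0 i))%:E)%E.
  by apply/funext => x; rewrite sumEFin -!EFinB.
have ipsi : lam.-integrable setT (fun x => (psi x)%:E).
  rewrite psiE; apply: integrableB => //; first exact: integrableB.
  by apply: integrable_sum.
have intpsi : (\int[lam]_x (psi x)%:E = 0)%E.
  rewrite psiE integralB //; last 2 first.
    exact: integrableB.
    by apply: integrable_sum.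
  rewrite integral_sum //; rewrite big1 ?sube0; last by move=> i _; exact: L.
  rewrite integralB // HH subee //; exact: integrable_fin_num.
have psi_ge0 x : 0 <= psi x.
  have := psi_mul (f x) (h x); rewrite -/(w _ _) => E.
  have [D0 _] := dprime (f x) (h x).
  have pb := phi_gt0 (h x).
  rewrite -(pmulr_rge0 _ pb); rewrite /psi.
  by rewrite (_ : \sum_(i < d) w i (e x) * _ = \sum_(i < d) (h x 0 i / phi (h x)) * (f x 0 i - h x 0 i)) // E.
have mpsi : measurable_fun setT (fun x => (psi x)%:E) := measurable_int _ ipsi.
have ae0 : ae_eq lam setT (fun x => (psi x)%:E) (fun _ => 0%E).
  apply: integral_ae_eq => // E _ mE; rewrite integral0.
  apply/eqP; rewrite eq_le; apply/andP; split.
    rewrite -intpsi; apply: ge0_subset_integral => // x _.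
    by rewrite lee_fin.
  by apply: integral_ge0 => x _; rewrite lee_fin.
apply: filterS ae0 => x /(_ I) /(congr1 fine) /= p0.
have := psi_mul (f x) (h x); rewrite -/(w _ _).
rewrite (_ : \sum_(i < d) (h x 0 i / phi (h x)) * (f x 0 i - h x 0 i) = \sum_(i < d) w i (e x) * (f x 0 i - h x 0 i)) //.
rewrite -/(psi x) p0 mulr0 => /esym.
by move/(dprime (f x) (h x)).2.
Qed.
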